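(* Let $\Gamma=(H,\iota,\sigma,m)$ be a Brauer graph, $H'\subseteq H$ stable under $\iota$, and $(h_1,r_1)$, $(h_2,r_2)$ two distinct maximal sectors of elements of $H'$ in $\Gamma$. For any admissible grading $d:H\to\mathbb{Z}/\overline m\mathbb{Z}$ of $\Gamma$, $$\mu^+_{(h_1,r_1)}\big(\mu^+_{(h_2,r_2)}(\Gamma,d)\big)=\mu^+_{(h_2,r_2)}\big(\mu^+_{(h_1,r_1)}(\Gamma,d)\big).$$
   Context: A Brauer graph $\Gamma=(H,\iota,\sigma,m)$: $H$ finite set, $\iota$ fixed-point-free involution, $\sigma$ a permutation, $m:H\to\mathbb{Z}_{>0}$ constant on $\sigma$-orbits; $\overline m=\mathrm{lcm}\{m(h)\}$. A grading $d:H\to\mathbb{Z}/\overline m\mathbb{Z}$ is admissible if for each $\sigma$-orbit $v$, $\sum_{h\in v}d(h)=\overline m/\widetilde m(v)$, $\widetilde m(v)$ being the value of $m$ on $v$; $(\Gamma,d)$ is then a $\mathbb{Z}/\overline m\mathbb{Z}$-graded Brauer graph. A sector of elements of $H'$ is a pair $(h,r)\in H\times\mathbb{Z}_{\ge0}$ with $r+1$ the least $r'\ge0$ such that $\sigma^{r'}h\notin H'$; it is maximal if moreover $\sigma^{-1}h\notin H'$. The graded generalized Kauer move of a sector is $\mu^+_{(h,r)}(\Gamma,d)=(H,\iota,\sigma_{(h,r)},m_{(h,r)},d_{(h,r)})$ with $\sigma_{(h,r)}=(h\ \ \sigma^{r+1}h)\circ\sigma\circ(\sigma^rh\ \ \iota\sigma^{r+1}h)$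 (permutations applied right to left), $m_{(h,r)}(\sigma^ih)=m(\iota\sigma^{r+1}h)$ for $0\le i\le r$ and $m_{(h,r)}=m$ elsewhere, and $d_{(h,r)}$ given by: $d_{(h,r)}(\iota\sigma^{r+1}h)=-\sum_{i=0}^rd(\sigma^ih)$; $d_{(h,r)}(\sigma^rh)=d(\iota\sigma^{r+1}h)+d(\sigma^rh)$ if $\iota\sigma^{r+1}h\ne\sigma^{-1}h$ and $=\sum_{i=-1}^rd(\sigma^ih)+d(\sigma^rh)$ otherwise; $d_{(h,r)}(\sigma^{-1}h)=\sum_{i=-1}^rd(\sigma^ih)$ if $\iota\sigma^{r+1}h\neq\sigma^{-1}h$ and $=-\sum_{i=0}^rd(\sigma^ih)$ otherwise; $d_{(h,r)}(h')=d(h')$ for all other $h'$. The result is again a graded Brauer graph, and a maximal sector of $\Gamma$ distinct from $(h,r)$ remains a sector of the moved graph, so the iterated moves in the claim are defined. *)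

(* Defs.v *)
From mathcomp Require Import all_boot all_order all_algebra all_fingroup.
Set Implicit Arguments. Unset Strict Implicit. Unset Printing Implicit Defensive.
Import GRing.Theory Num.Theory.

Section BrauerDefs.
Variable H : finType.

Definition spow (s : {perm H}) (i : nat) (x : H) : H := iter i s x.

Definition is_brauer_graph (iota sigma : {perm H}) (m : H -> nat) : Prop :=
  [/\ forall x, iota x != x,
      forall x, iota (iota x) = x,
      forall x, (0 < m x)%N &
      forall x, m (sigma x) = m x].

Definition mbar (m : H -> nat) : nat := \big[lcmn/1%N]_(x : H) m x.

(* admissible grading, d : H -> Z, read modulo mbar *)
Definition admissible (sigma : {perm H}) (m : H -> nat) (d : H -> int) : Prop :=
  forall x : H,
    ((\sum_(y in porbit sigma x) d y)%R = (mbar m %/ m x)%N %[mod (mbar m)])%Z.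

Definition sector (sigma : {perm H}) (Hp : {set H}) (h : H) (r : nat) : Prop :=
  (forall i, (i <= r)%N -> spow sigma i h \in Hp) /\ spow sigma r.+1 h \notin Hp.

Definition maximal_sector (sigma : {perm H}) (Hp : {set H}) (h : H) (r : nat)
  : Prop := sector sigma Hp h r /\ (sigma^-1)%g h \notin Hp.

(* graded Brauer graph data (iota is fixed by the moves) *)
Record gbg := GBG { gsigma : {perm H}; gm : H -> nat; gd : H -> int }.

Definition kauer_sigma (iota sigma : {perm H}) (h : H) (r : nat) : {perm H} :=
  (* (p * q) x = q (p x): applies (sigma^r h, iota sigma^{r+1} h) first,
     then sigma, then (h, sigma^{r+1} h) *)
  (tperm (spow sigma r h) (iota (spow sigma r.+1 h)) * sigma
     * tperm h (spow sigma r.+1 h))%g.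

Definition kauer_m (iota sigma : {perm H}) (m : H -> nat) (h : H) (r : nat)
  : H -> nat :=
  fun x => if [exists i : 'I_r.+1, x == spow sigma i h]
           then m (iota (spow sigma r.+1 h)) else m x.

Definition kauer_d (iota sigma : {perm H}) (d : H -> int) (h : H) (r : nat)
  : H -> int :=
  let a := iota (spow sigma r.+1 h) in
  let hm1 := (sigma^-1)%g h in
  let S0 := (\sum_(i < r.+1) d (spow sigma i h))%R in
  let Sm1 := (d hm1 + S0)%R in
  fun x =>
    if x == a then (- S0)%R
    else if x == spow sigma r h then
      (if a != hm1 then (d a + d (spow sigma r h))%R
       else (Sm1 + d (spow sigma r h))%R)
    else if x == hm1 then (if a != hm1 then Sm1 else (- S0)%R)
    else d x.

Definition kauer (iota : {perm H}) (G : gbg) (h : H) (r : nat) : gbg :=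
  GBG (kauer_sigma iota (gsigma G) h r)
      (kauer_m iota (gsigma G) (gm G) h r)
      (kauer_d iota (gsigma G) (gd G) h r).

End BrauerDefs.

(* Main.v *)
Require Import Defs.
From mathcomp Require Import all_boot all_order all_algebra all_fingroup.
From mathcomp Require Import ring.
From Stdlib Require Import FunctionalExtensionality.
Set Implicit Arguments. Unset Strict Implicit. Unset Printing Implicit Defensive.
Import GRing.Theory Num.Theory.

Definition upd (T : eqType) (d : T -> int) (a e p : T) (s : int) : T -> int :=
  fun x => if x == a then (- s)%R else if x == e then
     (if a != p then d a + d e else (d p + s) + d e)%R
   else if x == p then (if a != p then d p + s else - s)%R else d x.

Ltac crush := repeat (match goal with
 | H : is_true (?u != ?u) |- _ => by rewrite eqxx in H
 | |- context [?u == ?u] => rewrite eqxx /=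
 | H : is_true (?u != ?v) |- context [?u == ?v] => rewrite (negbTE H) /=
 | H : is_true (?v != ?u) |- context [?u == ?v] => rewrite (eq_sym u v) (negbTE H) /=
 end).

Section UC.
Local Open Scope ring_scope.
Lemma upd_comm (T : eqType) (d : T -> int) (a1 e1 p1 a2 e2 p2 : T) s1 s2 x :
  e1 != a1 -> e1 != p1 -> e1 != a2 -> e1 != p2 -> e1 != e2 ->
  e2 != a1 -> e2 != p1 -> e2 != a2 -> e2 != p2 ->
  a1 != a2 -> p1 != p2 ->
  upd (upd d a2 e2 p2 s2) a1 e1 (if p1 == a2 then e2 else p1) s1 x =
  upd (upd d a1 e1 p1 s1) a2 e2 (if p2 == a1 then e1 else p2) s2 x.
Proof.
move=> n1 n2 n3 n4 n5 n6 n7 n8 n9 n10 n11.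
rewrite /upd.
have [E1|E1] := eqVneq p1 a2; have [E2|E2] := eqVneq p2 a1.
all: try subst.
all: try (have [X1|X1] := eqVneq x a1; [subst; crush|]).
all: crush.
all: try (have [X2|X2] := eqVneq x a2; [subst; crush|]).
all: crush.
all: try (have [X3|X3] := eqVneq x e1; [subst; crush|]).
all: crush.
all: try (have [X4|X4] := eqVneq x e2; [subst; crush|]).
all: crush.
all: try (have [X5|X5] := eqVneq x p1; [subst; crush|]).
all: crush.
all: try (have [X6|X6] := eqVneq x p2; [subst; crush|]).
all: crush.
all: try (have [Y|Y] := eqVneq a1 p1; [subst; crush|]).
all: crush.
all: try (have [Y'|Y'] := eqVneq a2 p2; [subst; crush|]).
all: crush.

all: ring.
Qed.

End UC.

Lemma kauer_dE (H : finType) (iota sigma : {perm H}) d h r :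
  kauer_d iota sigma d h r = upd d (iota (spow sigma r.+1 h)) (spow sigma r h)
     ((sigma^-1)%g h) (\sum_(i < r.+1) d (spow sigma i h))%R.
Proof. by []. Qed.

Lemma spowS (H : finType) (s : {perm H}) i x : spow s i.+1 x = s (spow s i x).
Proof. by []. Qed.

Lemma spow_inj (H : finType) (s : {perm H}) i : injective (spow s i).
Proof. elim: i => [//|i IH] x y; rewrite !spowS => /perm_inj; exact: IH. Qed.

Lemma spowD (H : finType) (s : {perm H}) i j x : spow s (i + j) x = spow s i (spow s j x).
Proof. exact: iterD. Qed.

Lemma sector_uniq (H : finType) (s : {perm H}) Hp h r r' :
  sector s Hp h r -> sector s Hp h r' -> r = r'.
Proof.
move=> [A1 B1] [A2 B2]; apply/eqP; rewrite eqn_leq; apply/andP; split;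
  rewrite leqNgt; apply/negP => lt.
- by move: B2; rewrite A1.
- by move: B1; rewrite A2.
Qed.

Section Moves.
Variables (H : finType) (iota sigma : {perm H}) (Hp : {set H}) (h1 h2 : H) (r1 r2 : nat).
Hypothesis Hiota : forall x, iota (iota x) = x.
Hypothesis HHp : forall x, x \in Hp -> iota x \in Hp.
Hypothesis M1 : maximal_sector sigma Hp h1 r1.
Hypothesis M2 : maximal_sector sigma Hp h2 r2.
Hypothesis Hne : (h1, r1) != (h2, r2).

Lemma iota_notin x : x \notin Hp -> iota x \notin Hp.
Proof. by apply: contra => /HHp; rewrite Hiota. Qed.

Lemma disj i j : (i <= r1)%N -> (j <= r2)%N -> spow sigma i h1 != spow sigma j h2.
Proof.
move: M1 M2 => [[A1 B1] C1] [[A2 B2] C2] hi hj; apply/eqP => E.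
case: (ltngtP i j) => c.
- have : h1 = spow sigma (j - i) h2.
    apply: (@spow_inj _ sigma i); by rewrite E -spowD subnKC // ltnW.
  case E': (j - i) => [|k]; first by move: c; rewrite -subn_gt0 E'.
  rewrite spowS => E2; move: C1; rewrite E2 permK A2 //.
  by apply: leq_trans (ltnW _) hj; rewrite -E' leq_subr.
- have : h2 = spow sigma (i - j) h1.
    apply: (@spow_inj _ sigma j); by rewrite -E -spowD subnKC // ltnW.
  case E': (i - j) => [|k]; first by move: c; rewrite -subn_gt0 E'.
  rewrite spowS => E2; move: C2; rewrite E2 permK A1 //.
  by apply: leq_trans (ltnW _) hi; rewrite -E' leq_subr.
- subst j; have Eh := spow_inj E.
  have Er : r1 = r2 by apply: (sector_uniq M1.1); rewrite Eh; exact: M2.1.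
  by move: Hne; rewrite Eh Er eqxx.
Qed.

Lemma inHp1 i : (i <= r1)%N -> spow sigma i h1 \in Hp.
Proof. by case: M1 => [[A _] _]; apply: A. Qed.
Lemma inHp2 i : (i <= r2)%N -> spow sigma i h2 \in Hp.
Proof. by case: M2 => [[A _] _]; apply: A. Qed.
Lemma b1_notin : spow sigma r1.+1 h1 \notin Hp. Proof. by case: M1 => [[_ B] _]. Qed.
Lemma b2_notin : spow sigma r2.+1 h2 \notin Hp. Proof. by case: M2 => [[_ B] _]. Qed.
Lemma p1_notin : (sigma^-1)%g h1 \notin Hp. Proof. by case: M1. Qed.
Lemma p2_notin : (sigma^-1)%g h2 \notin Hp. Proof. by case: M2. Qed.

Lemma neq_in_out x y : x \in Hp -> y \notin Hp -> x != y.
Proof. by move=> hx; apply: contra => /eqP <-. Qed.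

Lemma b_neq : spow sigma r1.+1 h1 != spow sigma r2.+1 h2.
Proof. rewrite !spowS; apply: contra (disj (leqnn _) (leqnn _)) => /eqP/perm_inj ->. by []. Qed.

Let sigma1 := kauer_sigma iota sigma h1 r1.

Lemma spow_k i : (i <= r2.+1)%N -> spow sigma1 i h2 = spow sigma i h2.
Proof.
elim: i => [//|i IH] hi.
rewrite spowS IH ?(ltnW hi) // /sigma1 /kauer_sigma !permM.
have hi' : (i <= r2)%N by [].
have yin := inHp2 hi'.
have n1 : spow sigma r1 h1 != spow sigma i h2 by apply: disj.
have n2 : iota (spow sigma r1.+1 h1) != spow sigma i h2.
  by rewrite eq_sym; apply: neq_in_out yin _; exact: iota_notin b1_notin.
rewrite (tpermD n1 n2) -spowS.
have n3 : h1 != spow sigma i.+1 h2.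
  apply/eqP => E; have : spow sigma i h2 = (sigma^-1)%g h1 by rewrite E spowS permK.
  by move=> E2; move: p1_notin; rewrite -E2 yin.
have n4 : spow sigma r1.+1 h1 != spow sigma i.+1 h2.
  by rewrite !spowS; apply: contra n1 => /eqP/perm_inj ->.
by rewrite (tpermD n3 n4).
Qed.

Lemma inv_k : (sigma1^-1)%g h2 =
  if (sigma^-1)%g h2 == iota (spow sigma r1.+1 h1) then spow sigma r1 h1
  else (sigma^-1)%g h2.
Proof.
apply: (@perm_inj _ sigma1); rewrite -permM mulVg perm1 /sigma1 /kauer_sigma !permM.
have h2n1 : h2 != h1 by rewrite eq_sym; exact: (disj (leq0n _) (leq0n _)).
have h2nb : h2 != spow sigma r1.+1 h1 by apply: neq_in_out (inHp2 (leq0n _)) b1_notin.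
case: eqP => [E|E].
- by rewrite tpermL -E permKV tpermD // eq_sym.
- have n1 : spow sigma r1 h1 != (sigma^-1)%g h2.
    by apply: neq_in_out (inHp1 (leqnn _)) p2_notin.
  have n2 : iota (spow sigma r1.+1 h1) != (sigma^-1)%g h2.
    by rewrite eq_sym; apply/eqP.
  by rewrite (tpermD n1 n2) permKV tpermD // eq_sym.
Qed.

Lemma sum_k (d : H -> int) :
  (\sum_(i < r2.+1) kauer_d iota sigma d h1 r1 (spow sigma1 i h2) =
   \sum_(i < r2.+1) d (spow sigma i h2))%R.
Proof.
apply: eq_bigr => i _; have hi : (i <= r2)%N by rewrite -ltnS.
rewrite spow_k ?(leq_trans hi) // kauer_dE /upd.
have yin := inHp2 hi.
rewrite (negbTE (neq_in_out yin (iota_notin b1_notin))).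
rewrite eq_sym (negbTE (disj (leqnn _) hi)).
by rewrite (negbTE (neq_in_out yin p1_notin)).
Qed.

End Moves.

Lemma kauer_sigmaE (H : finType) (iota s : {perm H}) h r e b :
  spow s r h = e -> spow s r.+1 h = b ->
  kauer_sigma iota s h r = (tperm e (iota b) * s * tperm h b)%g.
Proof. by move=> <- <-. Qed.

Lemma kauer_m_eq (H : finType) (iota s s' : {perm H}) m h r :
  (forall i, (i <= r.+1)%N -> spow s i h = spow s' i h) ->
  kauer_m iota s m h r = kauer_m iota s' m h r.
Proof.
move=> E; apply: functional_extensionality => x; rewrite /kauer_m E //.
have -> // : [exists i : 'I_r.+1, x == spow s i h] = [exists i : 'I_r.+1, x == spow s' i h].
apply: eq_existsb => i; rewrite E //; apply: ltnW; exact: ltn_ord.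
Qed.

Lemma kauer_dE' (H : finType) (iota s : {perm H}) d h r b e p S :
  spow s r.+1 h = b -> spow s r h = e -> (s^-1)%g h = p ->
  (\sum_(i < r.+1) d (spow s i h))%R = S ->
  kauer_d iota s d h r = upd d (iota b) e p S.
Proof. by move=> <- <- <- <-. Qed.

Lemma tperm_comm (H : finType) (x y u v : H) :
  x != u -> x != v -> y != u -> y != v ->
  (tperm x y * tperm u v = tperm u v * tperm x y)%g.
Proof.
move=> n1 n2 n3 n4; apply/permP => z; rewrite !permM.
have m1 : u != x by rewrite eq_sym. have m2 : v != x by rewrite eq_sym.
have m3 : u != y by rewrite eq_sym. have m4 : v != y by rewrite eq_sym.
have [->|zx] := eqVneq z x.
  by rewrite tpermL (tpermD m3 m4) (tpermD m1 m2) tpermL.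
have [->|zy] := eqVneq z y.
  by rewrite tpermR (tpermD m1 m2) (tpermD m3 m4) tpermR.
have zx' : x != z by rewrite eq_sym. have zy' : y != z by rewrite eq_sym.
have [->|zu] := eqVneq z u.
  by rewrite (tpermD n1 n3) !tpermL (tpermD n2 n4).
have [->|zv] := eqVneq z v.
  by rewrite (tpermD n2 n4) !tpermR (tpermD n1 n3).
have zu' : u != z by rewrite eq_sym. have zv' : v != z by rewrite eq_sym.
by rewrite (tpermD zx' zy') (tpermD zu' zv') (tpermD zx' zy').
Qed.

Theorem proposition2p16 (H : finType) (iota sigma : {perm H}) (m : H -> nat)
  (Hp : {set H}) (h1 h2 : H) (r1 r2 : nat) (d : H -> int) :
  is_brauer_graph iota sigma m ->
  (forall x, x \in Hp -> iota x \in Hp) ->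
  maximal_sector sigma Hp h1 r1 ->
  maximal_sector sigma Hp h2 r2 ->
  (h1, r1) != (h2, r2) ->
  admissible sigma m d ->
  let G12 := kauer iota (kauer iota (GBG sigma m d) h2 r2) h1 r1 in
  let G21 := kauer iota (kauer iota (GBG sigma m d) h1 r1) h2 r2 in
  [/\ gsigma G12 = gsigma G21,
      gm G12 = gm G21 &
      forall x, (gd G12 x = gd G21 x %[mod (mbar m)])%Z].
Proof.
move=> [_ Hiota _ _] HHp M1 M2 Hne _ G12 G21.
have Hne' : (h2, r2) != (h1, r1) by rewrite eq_sym.
have S1 := spow_k Hiota HHp M1 M2 Hne.
have S2 := spow_k Hiota HHp M2 M1 Hne'.
have I1 := inv_k iota M1 M2 Hne.
have I2 := inv_k iota M2 M1 Hne'.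
have Su1 := sum_k Hiota HHp M1 M2 Hne.
have Su2 := sum_k Hiota HHp M2 M1 Hne'.
have D := disj M1 M2 Hne.
have e1in := inHp1 M1 (leqnn r1).
have e2in := inHp1 M2 (leqnn r2).
have h1in := inHp1 M1 (leq0n r1).
have h2in := inHp1 M2 (leq0n r2).
have b1out := b1_notin M1.
have b2out := b1_notin M2.
have a1out := iota_notin Hiota HHp b1out.
have a2out := iota_notin Hiota HHp b2out.
have p1out := p1_notin M1.
have p2out := p1_notin M2.
have bb := b_neq M1 M2 Hne.
have aa : iota (spow sigma r1.+1 h1) != iota (spow sigma r2.+1 h2).
  by apply: contra bb => /eqP /(congr1 iota); rewrite !Hiota => ->.
have pp : (sigma^-1)%g h1 != (sigma^-1)%g h2.
  by apply: contra (D 0%N 0%N (leq0n _) (leq0n _)) => /eqP /perm_inj ->.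
have f1 : spow sigma r1 h1 != spow sigma r2 h2 by apply: D.
have f2 : spow sigma r1 h1 != iota (spow sigma r2.+1 h2) by apply: (@neq_in_out _ Hp).
have f3 : iota (spow sigma r1.+1 h1) != spow sigma r2 h2.
  by rewrite eq_sym; apply: (@neq_in_out _ Hp).
have f4 : h2 != h1 by rewrite eq_sym; apply: (D 0%N 0%N).
have f5 : h2 != spow sigma r1.+1 h1 by apply: (@neq_in_out _ Hp).
have f6 : spow sigma r2.+1 h2 != h1 by rewrite eq_sym; apply: (@neq_in_out _ Hp).
have f7 : spow sigma r2.+1 h2 != spow sigma r1.+1 h1 by rewrite eq_sym.
split.
- rewrite /G12 /G21 /=.
  rewrite (kauer_sigmaE iota (S2 _ (leqW (leqnn _))) (S2 _ (leqnn _))).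
  rewrite (kauer_sigmaE iota (S1 _ (leqW (leqnn _))) (S1 _ (leqnn _))).
  rewrite /kauer_sigma.
  rewrite !mulgA (tperm_comm f1 f2 f3 aa) -!mulgA (tperm_comm f4 f5 f6 f7).
  by [].
- rewrite /G12 /G21 /=.
  rewrite (kauer_m_eq iota _ S2) (kauer_m_eq iota _ S1).
  apply: functional_extensionality => x; rewrite /kauer_m.
  have F1 : [exists i : 'I_r2.+1, iota (spow sigma r1.+1 h1) == spow sigma i h2] = false.
    apply/existsP => -[i /eqP E]; move: a1out; by rewrite E (inHp1 M2 (ltn_ord i)).
  have F2 : [exists i : 'I_r1.+1, iota (spow sigma r2.+1 h2) == spow sigma i h1] = false.
    apply/existsP => -[i /eqP E]; move: a2out; by rewrite E (inHp1 M1 (ltn_ord i)).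
  rewrite F1 F2.
  case: (@existsP _ (fun i : 'I_r1.+1 => x == spow sigma i h1)) => [[i /eqP Ex]|_];
  case: (@existsP _ (fun i : 'I_r2.+1 => x == spow sigma i h2)) => [[j /eqP Ey]|_] //.
  by move: (D i j (ltn_ord i) (ltn_ord j)); rewrite -Ex -Ey eqxx.
- move=> x; rewrite /G12 /G21 /=.
  rewrite (kauer_dE' iota (S2 _ (leqnn _)) (S2 _ (leqW (leqnn _))) I2 (Su2 d)).
  rewrite (kauer_dE' iota (S1 _ (leqnn _)) (S1 _ (leqW (leqnn _))) I1 (Su1 d)).
  rewrite !kauer_dE.
  have g1 : spow sigma r1 h1 != iota (spow sigma r1.+1 h1) by apply: (@neq_in_out _ Hp).
  have g2 : spow sigma r1 h1 != (sigma^-1)%g h1 by apply: (@neq_in_out _ Hp).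
  have g3 : spow sigma r1 h1 != (sigma^-1)%g h2 by apply: (@neq_in_out _ Hp).
  have g4 : spow sigma r2 h2 != iota (spow sigma r1.+1 h1) by apply: (@neq_in_out _ Hp).
  have g5 : spow sigma r2 h2 != (sigma^-1)%g h1 by apply: (@neq_in_out _ Hp).
  have g6 : spow sigma r2 h2 != iota (spow sigma r2.+1 h2) by apply: (@neq_in_out _ Hp).
  have g7 : spow sigma r2 h2 != (sigma^-1)%g h2 by apply: (@neq_in_out _ Hp).
  by rewrite upd_comm.
Qed.
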